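(* Let $n\geq 2$. If $\prec_1,\ldots,\prec_n$ are linear orders on $D_n$ which realize the product order $<$, then there is a permutation $\sigma\in S_n$ such that for all $i\leq n$ and all $\mathbf{a},\mathbf{b}\in D_n$, $a_i<b_i$ if and only if $\mathbf{a}\prec_{\sigma(i)}\mathbf{b}$.
   Context: Fix $n\geq 2$ and a set $D_n\subseteq\mathbb{Q}^n$ which is dense in $\mathbb{Q}^n$ (product topology) and such that no two distinct points of $D_n$ share a common coordinate. The product order: $\mathbf{a}<\mathbf{b}$ iff $a_i\leq b_i$ for all $i$ and $\mathbf{a}\neq\mathbf{b}$. Linear orders realize $<$ if their intersection is $<$. $S_n$ is the permutation group of $\{1,\ldots,n\}$. *)

(* Defs.v *)
From mathcomp Require Import all_boot all_order all_algebra all_fingroup.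
Set Implicit Arguments. Unset Strict Implicit. Unset Printing Implicit Defensive.
Import Order.TTheory GRing.Theory Num.Theory.
Local Open Scope ring_scope.

Definition pt (n : nat) := {ffun 'I_n -> rat}.

Definition prod_lt (n : nat) (a b : pt n) : Prop :=
  (forall i, a i <= b i) /\ a <> b.

(* D is dense in Q^n for the product topology: every basic open box
   (product of open intervals (x_i - e, x_i + e), e > 0) meets D. *)
Definition dense_Qn (n : nat) (D : pt n -> Prop) : Prop :=
  forall (x : pt n) (e : rat), 0 < e ->
    exists d, D d /\ forall i, `|d i - x i| < e.

Definition distinct_coords (n : nat) (D : pt n -> Prop) : Prop :=
  forall a b, D a -> D b -> a <> b -> forall i, a i <> b i.

Definition strict_linear_order_on (T : Type) (D : T -> Prop) (R : T -> T -> Prop) : Prop :=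
  (forall a, D a -> ~ R a a) /\
  (forall a b c, D a -> D b -> D c -> R a b -> R b c -> R a c) /\
  (forall a b, D a -> D b -> a <> b -> R a b \/ R b a).

Definition realizes (n : nat) (D : pt n -> Prop) (prec : 'I_n -> pt n -> pt n -> Prop) : Prop :=
  forall a b, D a -> D b -> (prod_lt a b <-> forall k, prec k a b).

(* Main.v *)
Require Import Defs.
From mathcomp Require Import all_boot all_order all_algebra all_fingroup.
From mathcomp Require Import ring lra.
From Stdlib Require Import Classical.
Import Order.TTheory GRing.Theory Num.Theory.
Set Implicit Arguments. Unset Strict Implicit.
Local Open Scope ring_scope.

Lemma mn (a b : rat) : Num.min a b <= a /\ Num.min a b <= b /\ a <= Num.max a b /\ b <= Num.max a b.
Proof. by rewrite !ge_min !le_max !lexx !orbT. Qed.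

Definition le_pt n (a b : pt n) := forall r, a r <= b r.
Definition typ n (i : 'I_n) (u v : pt n) := v i < u i /\ forall j, j != i -> u j < v j.

Ltac dall := repeat match goal with H : _ /\ _ |- _ => destruct H end.

Lemma minpos n (f : 'I_n -> rat) : (forall j, 0 < f j) -> exists d, 0 < d /\ forall j, d <= f j.
Proof.
move=> hf.
suff: forall s : seq 'I_n, exists d, 0 < d /\ forall j, j \in s -> d <= f j.
  by case/(_ (enum 'I_n)) => d [d0 hd]; exists d; split => // j; apply: hd; rewrite mem_enum.
elim=> [|a s [d [d0 hd]]]; first by exists 1; split.
exists (Num.min d (f a)); split; first by rewrite lt_min d0 hf.
move=> j; rewrite in_cons; case/orP => [/eqP ->|js]; first by rewrite ge_min lexx orbT.
by rewrite ge_min hd.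
Qed.

Lemma box n (D : pt n -> Prop) (hd : dense_Qn D) (lo hi : 'I_n -> rat) :
  (forall r, lo r < hi r) -> exists d, D d /\ forall r, lo r < d r /\ d r < hi r.
Proof.
move=> h.
have [e [e0 he]] := minpos (f := fun r => hi r - lo r) (fun r => ltac:(by rewrite subr_gt0)).
have e2 : 0 < e / 2 by lra.
have [d [Dd hdd]] := hd [ffun r => (lo r + hi r)/2] (e/2) e2.
exists d; split => // r.
have := hdd r; rewrite ffunE ltr_norml => /andP[h1 h2].
have h3 := he r.
split; lra.
Qed.


Lemma Aw n (D : pt n -> Prop) (prec : 'I_n -> pt n -> pt n -> Prop)
  (hlin : forall k, strict_linear_order_on D (prec k)) (hreal : realizes D prec)
  (u v : pt n) (i : 'I_n) : D u -> D v -> v i < u i -> exists k, prec k v u.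
Proof.
move=> Du Dv hi; apply: NNPP => hne.
have hu : u <> v by move=> e; rewrite e ltxx in hi.
have : prod_lt u v.
  apply/(hreal u v Du Dv) => k.
  case: (hlin k) => _ [_ tot].
  case: (tot u v Du Dv hu) => // hk.
  by exfalso; apply: hne; exists k.
by case=> /(_ i); rewrite leNgt hi.
Qed.

Lemma weak n (D : pt n -> Prop) (prec : 'I_n -> pt n -> pt n -> Prop)
  (hreal : realizes D prec) k (x y : pt n) :
  D x -> D y -> le_pt x y -> x = y \/ prec k x y.
Proof.
move=> Dx Dy hxy; case: (eqVneq x y) => [->|ne]; [by left|right].
have : prod_lt x y by split => //; exact/eqP.
by move/(hreal x y Dx Dy)/(_ k).
Qed.

Lemma Bt n (D : pt n -> Prop) (prec : 'I_n -> pt n -> pt n -> Prop)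
  (hlin : forall k, strict_linear_order_on D (prec k)) (hreal : realizes D prec)
  k (a b u v : pt n) : D a -> D b -> D u -> D v -> prec k v u ->
  le_pt a v -> le_pt u b -> prec k a b.
Proof.
move=> Da Db Du Dv h lav lub.
have [_ [tr _]] := hlin k.
have h1 : prec k a u.
  by case: (weak hreal k Da Dv lav) => [->//|h']; apply: (tr a v u).
by case: (weak hreal k Du Db lub) => [<-//|h']; apply: (tr a u b).
Qed.

Definition SE n (D : pt n -> Prop) (x y : 'I_n -> pt n) := forall p,
  D (x p) /\ D (y p) /\ typ p (x p) (y p) /\ forall q, q != p -> le_pt (x p) (y q).

Lemma Ct n (D : pt n -> Prop) (prec : 'I_n -> pt n -> pt n -> Prop)
  (hlin : forall k, strict_linear_order_on D (prec k)) (hreal : realizes D prec)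
  x y p q k : SE D x y -> p != q -> prec k (y p) (x p) -> prec k (y q) (x q) -> False.
Proof.
move=> hs ne hp hq.
have [Dxp [Dyp [_ hp1]]] := hs p.
have [Dxq [Dyq [_ hq1]]] := hs q.
have h := Bt hlin hreal Dxp Dyp Dxq Dyq hq (hp1 q ltac:(by rewrite eq_sym)) (hq1 p ne).
have [irr [tr _]] := hlin k.
by apply: (irr (x p) Dxp); apply: (tr _ (y p)).
Qed.

Lemma Duniq n (D : pt n -> Prop) (prec : 'I_n -> pt n -> pt n -> Prop)
  (hlin : forall k, strict_linear_order_on D (prec k)) (hreal : realizes D prec)
  x y p k k' : SE D x y -> prec k (y p) (x p) -> prec k' (y p) (x p) -> k = k'.
Proof.
move=> hs hk hk'.
have hex : forall q, exists k, prec k (y q) (x q).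
  move=> q; have [Dx [Dy [[t _] _]]] := hs q.
  exact: (Aw hlin hreal Dx Dy t).
have [f hf] := fin_all_exists hex.
have finj : injective f.
  move=> q1 q2 e; apply/eqP; apply: contraT => ne; exfalso.
  apply: (Ct hlin hreal hs ne (hf q1)); rewrite e; exact: hf q2.
have [g fg gf] := injF_bij finj.
suff hh : forall k0, prec k0 (y p) (x p) -> k0 = f p by rewrite (hh k hk) (hh k' hk').
move=> k0 h.
have : g k0 = p.
  apply/eqP; apply: contraT => ne; exfalso.
  apply: (Ct hlin hreal hs ne _ h).
  by have := hf (g k0); rewrite gf.
by move=> <-; rewrite gf.
Qed.


Lemma Emb n (D : pt n -> Prop) (hd : dense_Qn D) (u v : pt n) i :
  D u -> D v -> typ i u v -> exists x y, SE D x y /\ x i = u /\ y i = v.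
Proof.
move=> Du Dv [tui tuj].
have hp : forall p, exists xy : pt n * pt n, (p = i -> xy = (u,v)) /\
   (p != i -> D xy.1 /\ D xy.2 /\ ((u p + v p)/2 < xy.1 p /\ xy.1 p < v p) /\
     (forall r, r != p -> xy.1 r < Num.min (u r) (v r)) /\
     (u p < xy.2 p /\ xy.2 p < (u p + v p)/2) /\
     (forall r, r != p -> Num.max (u r) (v r) < xy.2 r)).
  move=> p; case: (eqVneq p i) => [->|ne]; first by exists (u, v); split => //; rewrite eqxx.
  have upv := tuj p ne.
  case: (box hd (lo := fun r => if r == p then (u p + v p)/2 else Num.min (u r) (v r) - 1)
                (hi := fun r => if r == p then v p else Num.min (u r) (v r)))
    => [r /=|x1 [Dx1 hx1]]; first by case: ifP => _; lra.
  case: (box hd (lo := fun r => if r == p then u p else Num.max (u r) (v r))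
                (hi := fun r => if r == p then (u p + v p)/2 else Num.max (u r) (v r) + 1))
    => [r /=|y1 [Dy1 hy1]]; first by case: ifP => _; lra.
  exists (x1, y1); split => [e|_]; first by rewrite e eqxx in ne.
  split => //; split => //.
  split; first by have := hx1 p; rewrite eqxx.
  split; first by move=> r hr; have := hx1 r; rewrite (negbTE hr); case.
  split; first by have := hy1 p; rewrite eqxx.
  by move=> r hr; have := hy1 r; rewrite (negbTE hr); case.
have [f hf] := fin_all_exists hp.
exists (fun p => (f p).1), (fun p => (f p).2).
have fi : f i = (u,v) := (hf i).1 erefl.
split; last by rewrite fi.
move=> p; case: (eqVneq p i) => [->|pi].
  rewrite fi /=; split => //; split => //; split; first by split.
  move=> q qi r.
  have [_ [Dyq [_ [_ [[hq1 hq2] hq3]]]]] := (hf q).2 qi.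
  case: (eqVneq r q) => [->|rq]; first lra.
  have := mn (u r) (v r); have := hq3 r rq; move=> *; dall; lra.
have [Dx [Dy [[hx1 hx2] [hx3 [[hy1 hy2] hy4]]]]] := (hf p).2 pi.
split => //; split => //; split.
  split; first lra.
  move=> j jp; have := mn (u j) (v j); have := hx3 j jp; have := hy4 j jp; move=> *; dall; lra.
move=> q qp r; case: (eqVneq q i) => [qi|qi].
  rewrite qi fi /=; case: (eqVneq r p) => [->|rp]; first lra.
  have := hx3 r rp; have := mn (u r) (v r); move=> *; dall; lra.
have [_ [_ [_ [_ [[hz1 hz2] hz4]]]]] := (hf q).2 qi.
case: (eqVneq r p) => [->|rp].
  have pq : p != q by rewrite eq_sym.
  have := hz4 p pq; have := mn (u p) (v p); move=> *; dall; lra.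
case: (eqVneq r q) => [->|rq].
  have := hx3 q qp; have := mn (u q) (v q); move=> *; dall; lra.
have := hx3 r rp; have := hz4 r rq; have := mn (u r) (v r); move=> *; dall; lra.
Qed.


Lemma chain n (D : pt n -> Prop) (hd : dense_Qn D) (prec : 'I_n -> pt n -> pt n -> Prop)
  (hlin : forall k, strict_linear_order_on D (prec k)) (hreal : realizes D prec)
  i k (u v u' v' : pt n) : D u -> D v -> typ i u v -> prec k v u ->
  D u' -> D v' -> typ i u' v' -> prec k v' u'.
Proof.
move=> Du Dv [t1 t2] hk Du' Dv' [s1 s2].
case: (box hd (lo := fun r => if r == i then Num.max (u i) (u' i) else u r)
              (hi := fun r => if r == i then Num.max (u i) (u' i) + 1 else (u r + v r)/2))
  => [r /=|uR [DuR huR]].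
  by case: ifP => [_|/negbT ri]; [lra | have := t2 r ri; lra].
case: (box hd (lo := fun r => if r == i then Num.min (v i) (v' i) - 1 else (u r + v r)/2)
              (hi := fun r => if r == i then Num.min (v i) (v' i) else v r))
  => [r /=|vR [DvR hvR]].
  by case: ifP => [_|/negbT ri]; [lra | have := t2 r ri; lra].
case: (box hd (lo := fun r => if r == i then (u' i + v' i)/2 else Num.min (uR r) (u' r) - 1)
              (hi := fun r => if r == i then u' i else Num.min (uR r) (u' r)))
  => [r /=|uS [DuS huS]].
  by case: ifP => [_|/negbT ri]; lra.
case: (box hd (lo := fun r => if r == i then v' i else Num.max (vR r) (v' r))
              (hi := fun r => if r == i then (u' i + v' i)/2 else Num.max (vR r) (v' r) + 1))
  => [r /=|vS [DvS hvS]].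
  by case: ifP => [_|/negbT ri]; lra.
have Fi := conj (huR i) (conj (hvR i) (conj (huS i) (hvS i))).
rewrite /= eqxx in Fi.
have Fj : forall r, r != i -> _ := fun r ri =>
  conj (t2 r ri) (conj (s2 r ri) (conj (huR r) (conj (hvR r) (conj (huS r) (hvS r))))).
have Mi := conj (mn (u i) (u' i)) (mn (v i) (v' i)).
have G : forall r, (r = i /\ _) \/ (r != i /\ _) := fun r =>
  match eqVneq r i with
  | EqNotNeq e => or_introl (conj e (conj Fi Mi))
  | NeqNotEq ri => or_intror (conj ri (conj (Fj r ri) (conj (mn (uR r) (u' r)) (mn (vR r) (v' r)))))
  end.
have RR : typ i uR vR.
  split; first by dall; lra.
  move=> j ji; have := G j; rewrite /= (negbTE ji); case => -[e]; first by rewrite e eqxx in ji.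
  by move=> *; dall; lra.
have SS : typ i uS vS.
  split; first by dall; lra.
  move=> j ji; have := G j; rewrite /= (negbTE ji); case => -[e]; first by rewrite e eqxx in ji.
  by move=> *; dall; lra.
have L : forall (a b : pt n), (forall r, (r = i -> a r <= b r) /\ (r != i -> a r <= b r)) -> le_pt a b.
  move=> a b h r; have [h1 h2] := h r.
  by case: (eqVneq r i) => [e|ri]; [apply: h1 | apply: h2].
have hkR : prec k vR uR.
  apply: (Bt hlin hreal DvR DuR Du Dv hk); apply: L => r; split.
    by move=> ->; dall; lra.
  by move=> ri; have := G r; rewrite /= (negbTE ri); case => -[e]; [by rewrite e eqxx in ri | move=> *; dall; lra].
  by move=> ->; dall; lra.
  by move=> ri; have := G r; rewrite /= (negbTE ri); case => -[e]; [by rewrite e eqxx in ri | move=> *; dall; lra].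
have [k' hk'S] := Aw hlin hreal DuS DvS SS.1.
have hk'R : prec k' vR uR.
  apply: (Bt hlin hreal DvR DuR DuS DvS hk'S); apply: L => r; split.
    by move=> ->; dall; lra.
  by move=> ri; have := G r; rewrite /= (negbTE ri); case => -[e]; [by rewrite e eqxx in ri | move=> *; dall; lra].
  by move=> ->; dall; lra.
  by move=> ri; have := G r; rewrite /= (negbTE ri); case => -[e]; [by rewrite e eqxx in ri | move=> *; dall; lra].
have [x [y [hs [hxi hyi]]]] := Emb hd DuR DvR RR.
have e : k = k'.
  by apply: (Duniq hlin hreal (p := i) hs); rewrite hxi hyi.
subst k'.
apply: (Bt hlin hreal Dv' Du' DuS DvS hk'S); apply: L => r; split.
  by move=> ->; dall; lra.
by move=> ri; have := G r; rewrite /= (negbTE ri); case => -[e]; [by rewrite e eqxx in ri | move=> *; dall; lra].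
by move=> ->; dall; lra.
by move=> ri; have := G r; rewrite /= (negbTE ri); case => -[e]; [by rewrite e eqxx in ri | move=> *; dall; lra].
Qed.


Lemma Fin n (D : pt n -> Prop) (hd : dense_Qn D) (prec : 'I_n -> pt n -> pt n -> Prop)
  (hlin : forall k, strict_linear_order_on D (prec k)) (hreal : realizes D prec)
  i k (a b : pt n) : D a -> D b -> a i < b i ->
  (forall u v, D u -> D v -> typ i u v -> prec k v u) -> prec k a b.
Proof.
move=> Da Db hab hall.
case: (box hd (lo := fun r => if r == i then (a i + b i)/2 else Num.min (a r) (b r) - 1)
              (hi := fun r => if r == i then b i else Num.min (a r) (b r)))
  => [r /=|u [Du hu]]; first by case: ifP => _; lra.
case: (box hd (lo := fun r => if r == i then a i else Num.max (a r) (b r))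
              (hi := fun r => if r == i then (a i + b i)/2 else Num.max (a r) (b r) + 1))
  => [r /=|v [Dv hv]]; first by case: ifP => _; lra.
have T : typ i u v.
  split; first by have := hu i; have := hv i; rewrite /= eqxx; move=> *; dall; lra.
  move=> j ji; have := hu j; have := hv j; have := mn (a j) (b j); rewrite /= (negbTE ji).
  by move=> *; dall; lra.
apply: (Bt hlin hreal Da Db Du Dv (hall u v Du Dv T)) => r;
  have := hu r; have := hv r; have := mn (a r) (b r);
  (case: (eqVneq r i) => [->|ri]; [rewrite /= ?eqxx | rewrite /= ?(negbTE ri)]); move=> *; dall; lra.
Qed.

Lemma ex_typ n (D : pt n -> Prop) (hd : dense_Qn D) i : exists u v, D u /\ D v /\ typ i u v.
Proof.
case: (box hd (lo := fun r => if r == i then 1 else -2) (hi := fun r => if r == i then 2 else -1))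
  => [r /=|u [Du hu]]; first by case: ifP => _; lra.
case: (box hd (lo := fun r => if r == i then -2 else 1) (hi := fun r => if r == i then -1 else 2))
  => [r /=|v [Dv hv]]; first by case: ifP => _; lra.
exists u, v; split => //; split => //; split.
  by have := hu i; have := hv i; rewrite /= eqxx; move=> *; dall; lra.
by move=> j ji; have := hu j; have := hv j; rewrite /= (negbTE ji); move=> *; dall; lra.
Qed.

Theorem lemma6p5 (n : nat) (hn : (2 <= n)%N) (D : pt n -> Prop)
  (hdense : dense_Qn D) (hdist : distinct_coords D)
  (prec : 'I_n -> pt n -> pt n -> Prop)
  (hlin : forall k, strict_linear_order_on D (prec k))
  (hreal : realizes D prec) :
  exists sigma : 'S_n, forall (i : 'I_n) (a b : pt n), D a -> D b ->
    (a i < b i <-> prec (sigma i) a b).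
Proof.
have hs : forall i, exists k, forall u v, D u -> D v -> typ i u v -> prec k v u.
  move=> i; have [u [v [Du [Dv T]]]] := ex_typ hdense i.
  have [k hk] := Aw hlin hreal Du Dv T.1.
  by exists k => u' v' Du' Dv' T'; apply: (chain hdense hlin hreal Du Dv T hk).
have [s hsig] := fin_all_exists hs.
have sinj : injective s.
  move=> i j e; apply/eqP; apply: contraT => ne; exfalso.
  have [u [v [Du [Dv T]]]] := ex_typ hdense i.
  have [x [y [hse _]]] := Emb hdense Du Dv T.
  have [Dxi [Dyi [Ti _]]] := hse i.
  have [Dxj [Dyj [Tj _]]] := hse j.
  apply: (Ct hlin hreal hse ne (hsig i _ _ Dxi Dyi Ti)).
  by rewrite e; apply: hsig.
exists (perm sinj) => i a b Da Db; rewrite permE; split.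
  by move=> hab; apply: (Fin hdense hlin hreal Da Db hab (hsig i)).
move=> hp; case: (ltgtP (a i) (b i)) => // h.
  have hq := Fin hdense hlin hreal Db Da h (hsig i).
  have [irr [tr _]] := hlin (s i).
  by exfalso; apply: (irr a Da); apply: (tr a b a).
have ab : a = b.
  case: (eqVneq a b) => // ne; exfalso.
  by apply: (hdist a b Da Db _ i h); exact/eqP.
have [irr _] := hlin (s i).
by subst b; exfalso; apply: (irr a Da).
Qed.
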